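(* Let $n$ be a positive integer, let $V$ be a set with $|V|=n$, and let $\sigma:[n]\to V$ be a bijection. Let $\mathcal{P}\subseteq P_s(V)$ be a signed-increasing property, and set $d=n-\operatorname{alt}(\mathcal{P},\sigma)-1$. If $d\neq -1$, then there is a map $\varphi:V\to S^d$ (i.e. a multiset $Z=\varphi(V)\subset S^d$ of size $n$ identified with $V$) such that for every $x\in S^d$, $$\bigl(\{v\in V:\varphi(v)\in H(x)\},\ \{v\in V:\varphi(v)\in H(-x)\}\bigr)\in\mathcal{P}.$$ Moreover, if $d\geq 1$, the map $\varphi$ can be chosen injective (so that $Z$ is a set).
   Context: For a positive integer $n$, $[n]=\{1,\dots,n\}$. $S^d\subset\mathbb{R}^{d+1}$ is the unit sphere, and for $x\in S^d$, $H(x)=\{y\in S^d:\langle x,y\rangle>0\}$ is the open hemisphere centered at $x$. For $X=(x_1,\dots,x_n)\in\{+,-,0\}^n$, an alternating subsequence of $X$ is a subsequence $x_{j_1},\dots,x_{j_m}$ ($j_1<\dots<j_m$) of nonzero terms such that consecutive terms have different signs; $\operatorname{alt}(X)$ is the length of a longest alternating subsequence, with $\operatorname{alt}(0,\dots,0)=0$. Set $X^+=\{j:x_j=+\}$, $X^-=\{j:x_j=-\}$. The signed-power set of $V$ is $P_s(V)=\{(A,B):A,B\subseteq V,\ A\cap B=\varnothing\}$, partially ordered by $(A,B)\subseteq(C,D)$ iff $A\subseteq C$ and $B\subseteq D$. A signed-increasing property is a family $\mathcal{P}\subseteq P_s(V)$ such that $F_1\in\mathcal{P}$ and $F_1\subseteq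 F_2\in P_s(V)$ imply $F_2\in\mathcal{P}$. For a bijection $\sigma:[n]\to V$ and $X\in\{+,-,0\}^n$, write $X_\sigma=(\sigma(X^+),\sigma(X^-))\in P_s(V)$, and define $$\operatorname{alt}(\mathcal{P},\sigma)=\max\{\operatorname{alt}(X): X\in\{+,-,0\}^n,\ X_\sigma\notin\mathcal{P}\}.$$ *)

(* Defs.v *)
From mathcomp Require Import all_boot all_order all_algebra.
From mathcomp Require Import reals.
Set Implicit Arguments. Unset Strict Implicit. Unset Printing Implicit Defensive.
Import Order.TTheory GRing.Theory Num.Theory.

(* Signs: Some true = +, Some false = -, None = 0. *)
Notation sign := (option bool).

Definition alternating (s : seq sign) : bool :=
  all (fun o => o != None) s && sorted (fun a b => a != b) s.

Definition alt (n : nat) (X : n.-tuple sign) : nat :=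
  \max_(m : n.-tuple bool | alternating (mask m X)) size (mask m X).

(* X^+ and X^- as subsets of 'I_n  ([n] = {1..n} is represented by 'I_n). *)
Definition Xplus (n : nat) (X : n.-tuple sign) : {set 'I_n} :=
  [set i | tnth X i == Some true].
Definition Xminus (n : nat) (X : n.-tuple sign) : {set 'I_n} :=
  [set i | tnth X i == Some false].

Definition Xsigma (n : nat) (V : finType) (sigma : 'I_n -> V) (X : n.-tuple sign)
  : {set V} * {set V} := (sigma @: Xplus X, sigma @: Xminus X).

(* A family P of pairs of subsets of V, viewed as a subfamily of the signed
   power set P_s(V) (all members are disjoint pairs) which is upward closed in P_s(V). *)
Definition signed_increasing (V : finType) (P : pred ({set V} * {set V})) : Prop :=
  (forall F, P F -> [disjoint F.1 & F.2]) /\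
  (forall A B C D : {set V}, P (A, B) -> A \subset C -> B \subset D ->
     [disjoint C & D] -> P (C, D)).

(* alt(P, sigma) = max { alt X : X_sigma \notin P } (0 if there is no such X). *)
Definition alt_prop (n : nat) (V : finType) (P : pred ({set V} * {set V}))
  (sigma : 'I_n -> V) : nat :=
  \max_(X : n.-tuple sign | ~~ P (Xsigma sigma X)) alt X.

Local Open Scope ring_scope.

Definition dotp (R : realType) (k : nat) (x y : 'rV[R]_k) : R :=
  \sum_(i < k) x 0 i * y 0 i.

Definition sphere (R : realType) (d : nat) : pred 'rV[R]_(d.+1) :=
  fun x => dotp x x == 1.

Definition hemi (R : realType) (d : nat) (x : 'rV[R]_(d.+1)) : pred 'rV[R]_(d.+1) :=
  fun y => sphere y && (0 < dotp x y).

(* Main.v *)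
Require Import Defs.
From mathcomp Require Import all_boot all_order all_algebra.
From mathcomp Require Import reals.
From mathcomp Require Import ring lra zify.
Import Order.TTheory GRing.Theory Num.Theory.
Local Open Scope ring_scope.
Set Implicit Arguments. Unset Strict Implicit.
Lemma exW (F : fieldType) (n a k : nat) (M : 'M[F]_(n, a)) :
  (k <= n - a)%N -> exists W : 'M[F]_(k, n), row_free W /\ W *m M = 0.
Proof.
move=> hk.
set K := kermx M.
have hr : (k <= \rank (row_base K))%N.
  rewrite (eq_row_base K) /K mxrank_ker.
  apply: leq_trans hk _; apply: leq_sub2l; exact: rank_leq_col.
have e : (\rank K = k + (\rank K - k))%N by rewrite subnKC // -(eq_row_base K).
set B := castmx (e, erefl n) (row_base K).
have BM : B *m M = 0.
  apply/eqP; rewrite -sub_kermx; rewrite (eqmx_cast _ (e, erefl n)) /=.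
  by rewrite eq_row_base.
exists (usubmx B); split.
  apply: inj_row_free => v hv.
  have : row_mx v 0 *m B = 0.
    by rewrite -[B]vsubmxK mul_row_col hv mul0mx addr0.
  move/eqP; rewrite mulmx_free_eq0; last by rewrite row_free_castmx row_base_free.
  by rewrite row_mx_eq0 => /andP[/eqP ->].
have H : col_mx (usubmx B *m M) (dsubmx B *m M) = 0 by rewrite -mul_col_mx vsubmxK.
by move/eqP: H; rewrite col_mx_eq0 => /andP[/eqP ->].
Qed.

Section Core.
Variable R : realFieldType.
Variable y : nat -> R.
Fixpoint lnz m : R := if m is m'.+1 then (if y m' != 0 then y m' else lnz m') else 0.
Fixpoint galt m : nat := if m is m'.+1 then
  (if y m' == 0 then galt m' else if lnz m' == 0 then 1%N
   else if 0 < y m' * lnz m' then galt m' else (galt m').+1) else 0%N.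

Lemma lnz0 m : lnz m = 0 -> forall i, (i < m)%N -> y i = 0.
Proof.
elim: m => [//|m IH] /=; case: eqP => [ym|ym].
  by move=> /IH h i; rewrite ltnS leq_eqVlt => /orP[/eqP->//|]; apply: h.
by move=> /= e; rewrite e in ym.
Qed.

Lemma galt0 m : lnz m = 0 -> galt m = 0%N.
Proof.
elim: m => [//|m IH] /=; case: eqP => [ym|ym] /=.
  by move=> /IH.
by move=> e; rewrite e in ym.
Qed.

Lemma galt_count m : (galt m <= \sum_(i < m) (y i != 0%R))%N.
Proof.
elim: m => [|m IH]; first by rewrite big_ord0.
rewrite big_ord_recr /=; case: (eqVneq (y m) 0) => [_|ym] /=; first by rewrite addn0.
case: (eqVneq (lnz m) 0) => [e|e].
  by apply: (leq_trans _ (leq_addl _ _)); move: ym; rewrite -[in y m](_ : nat_of_ord (@ord_max m) = m) //; by case: (_ != _).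
by case: ifP => _; rewrite ?addn1 // ?ltnS // (leq_trans IH) // leq_addr.
Qed.

Lemma poly_ex m : lnz m != 0 -> exists p : {poly R},
  (size p <= galt m)%N /\
  (forall i, (i < m)%N -> y i != 0 -> 0 < p.[i%:R] * y i) /\
  (forall t, (m.-1)%:R <= t -> 0 < p.[t] * lnz m).
Proof.
elim: m => [|m IH] /=; first by rewrite eqxx.
case: (eqVneq (y m) 0) => [ym|ym] /=.
  move=> /IH [p [hs [hi ht]]]; exists p; split => //; split.
    move=> i; rewrite ltnS leq_eqVlt => /orP[/eqP->|/hi//]; by rewrite ym eqxx.
  move=> t ht'; apply: ht; apply: le_trans ht'; by rewrite ler_nat leq_pred.
move=> _; case: (eqVneq (lnz m) 0) => [l0|l0].
  exists (y m)%:P; rewrite size_polyC ym; split => //; split.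
    move=> i; rewrite ltnS leq_eqVlt => /orP[/eqP->|/(lnz0 l0) ->]; last by rewrite eqxx.
    by move=> _; rewrite hornerC; nra.
  by move=> t _; rewrite hornerC; nra.
have [p [hs [hi ht]]] := IH l0.
have hm : 0 < p.[m%:R] * lnz m by apply: ht; rewrite ler_nat leq_pred.
case: ltrP => hs'.
  exists p; split => //; split.
    move=> i; rewrite ltnS leq_eqVlt => /orP[/eqP->|/hi//] _; nra.
  move=> t /= htm.
  have h1 : (m.-1)%:R <= t by apply: le_trans htm; rewrite ler_nat leq_pred.
  have := ht t h1; nra.
have hneg : y m * lnz m < 0 by rewrite lt_neqAle hs' mulf_neq0.
exists (p * ((m%:R - 2^-1)%:P - 'X)); split.
  apply: leq_trans (size_polyMleq _ _) _.
  by rewrite -opprB size_polyN size_XsubC addn2 /= ltnS.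
split.
  move=> i; rewrite ltnS leq_eqVlt => /orP[/eqP->|him] yi.
    rewrite hornerM !hornerE; nra.
  have hi1 : i%:R + 1 <= (m%:R : R) by rewrite natr1 ler_nat.
  have := hi i him yi; rewrite hornerM !hornerE; nra.
move=> t htm.
have h1 : (m.-1)%:R <= t by apply: le_trans htm; rewrite ler_nat leq_pred.
have h2 := ht t h1.
have hpy : p.[t] * y m < 0.
  have hl : 0 < lnz m * lnz m by rewrite -expr2 exprn_even_gt0.
  have : p.[t] * y m * (lnz m * lnz m) < 0 by nra.
  by rewrite pmulr_llt0.
have hh : (0:R) < 2^-1 by rewrite invr_gt0 ltr0n.
have hc : m%:R - 2^-1 - t < 0 by lra.
rewrite hornerM !hornerE; nra.
Qed.
End Core.

Section M.
Variable R : realFieldType.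
Variable y : nat -> R.
Definition sgnR (r : R) : option bool := if 0 < r then Some true else if r < 0 then Some false else None.
Lemma sgnR_nz r : (sgnR r != None) = (r != 0).
Proof. by rewrite /sgnR; case: ltrgtP. Qed.
Lemma sgnR_neg a b : a * b < 0 -> sgnR a != sgnR b.
Proof.
rewrite /sgnR; case: (ltrgtP 0 a) => ha; case: (ltrgtP 0 b) => hb //; try nra.
all: move=> _; rewrite -?ha -?hb; nra.
Qed.
Lemma sgnR_pos a b : 0 < a * b -> sgnR a = sgnR b.
Proof.
rewrite /sgnR; case: (ltrgtP 0 a) => ha; case: (ltrgtP 0 b) => hb h //.
all: exfalso; rewrite -?ha -?hb in h; nra.
Qed.

Lemma mask_ex m : exists mk : seq bool, size mk = m /\
  alternating (mask mk (map (fun i => sgnR (y i)) (iota 0 m))) /\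
  size (mask mk (map (fun i => sgnR (y i)) (iota 0 m))) = galt y m /\
  (lnz y m != 0 -> last None (mask mk (map (fun i => sgnR (y i)) (iota 0 m))) = sgnR (lnz y m)).
Proof.
elim: m => [|m [mk [hs [ha [hz hl]]]]]; first by exists [::]; do !split => //; rewrite /= eqxx.
have ei : iota 0 m.+1 = rcons (iota 0 m) m by rewrite -addn1 iotaD cats1.
set s := mask mk _ in ha hz hl.
have hsz : size mk = size (map (fun i => sgnR (y i)) (iota 0 m)) by rewrite size_map size_iota.
rewrite ei map_rcons /=.
case: (eqVneq (y m) 0) => [ym|ym].
  exists (rcons mk false); rewrite size_rcons hs mask_rcons // cats0 -/s; split => //.
case: (eqVneq (lnz y m) 0) => [l0|l0].
  have s0 : s = [::] by apply/size0nil; rewrite hz galt0.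
  exists (rcons mk true); rewrite size_rcons hs mask_rcons // -/s s0 /=; split => //.
  by rewrite /alternating /= sgnR_nz ym.
have sn : s != [::] by apply/eqP => e; move: (hl l0); rewrite e /= => /esym/eqP; apply/negP; rewrite sgnR_nz.
case: (ltrP 0 (y m * lnz y m)) => hyl.
  exists (rcons mk false); rewrite size_rcons hs mask_rcons // cats0 -/s; split => //.
  split => //; split => // _ /=; by rewrite hl // (sgnR_pos hyl).
have hneg : y m * lnz y m < 0 by rewrite lt_neqAle hyl mulf_neq0.
exists (rcons mk true); rewrite size_rcons hs mask_rcons // -/s /= cats1; split => //.
rewrite size_rcons hz; split; last by split => // _ /=; rewrite last_rcons.
clear hz hsz ei; clearbody s; move: ha sn; rewrite /alternating all_rcons sgnR_nz ym /=.
case: s hl => [//|h t] hl /andP[-> hsort] _ /=; rewrite rcons_path; apply/andP; split; first exact: hsort.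
by move: (hl l0) => /= ->; rewrite eq_sym sgnR_neg.
Qed.
End M.

Lemma exists_subset (T : finType) (A : {set T}) k : (k <= #|A|)%N ->
  exists2 S : {set T}, S \subset A & #|S| = k.
Proof.
elim: k => [_|k IH hk]; first by exists set0; rewrite ?sub0set ?cards0.
have [S sA cS] := IH (ltnW hk).
have : (0 < #|A :\: S|)%N by rewrite cardsD (setIidPr sA) cS subn_gt0.
case/card_gt0P => z; rewrite inE => /andP[zS zA].
exists (z |: S); first by rewrite subUset sub1set zA sA.
by rewrite cardsU1 zS cS.
Qed.

Section Main.
Variable R : realType.
Variables n a d : nat.
Hypothesis hd : (d.+1 + a = n)%N.
Variable W : 'M[R]_(d.+1, n).
Hypothesis Wfree : row_free W.
Hypothesis WM : W *m (\matrix_(i < n, j < a) ((i : nat)%:R ^+ j)) = 0.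

Definition yf (x : 'rV[R]_(d.+1)) : nat -> R :=
  fun i => oapp (fun k => (x *m W) 0 k) 0 (insub i).
Lemma yfE x (k : 'I_n) : yf x k = (x *m W) 0 k.
Proof. by rewrite /yf valK. Qed.

Lemma core x : x != 0 -> (a < galt (yf x) n)%N.
Proof.
move=> x0; rewrite ltnNge; apply/negP => hg.
have y0 : x *m W != 0 by rewrite mulmx_free_eq0.
have [k hk] := rV0Pn _ y0.
have l0 : lnz (yf x) n != 0.
  apply/eqP => /lnz0 h; move: (h k (ltn_ord k)); rewrite yfE => e; by rewrite e eqxx in hk.
have [p [hs [hi _]]] := poly_ex l0.
have hsum : 0 < \sum_(k < n) yf x k * p.[(k : nat)%:R].
  rewrite (bigD1 k) //=; apply: ltr_pwDl.
    by rewrite mulrC; apply: hi => //; rewrite yfE.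
  apply: sumr_ge0 => i _; case: (eqVneq (yf x i) 0) => [->|h]; first by rewrite mul0r.
  by rewrite mulrC ltW // hi.
have hzero : \sum_(k < n) yf x k * p.[(k : nat)%:R] = 0.
  under eq_bigr do rewrite (horner_coef_wide _ (leq_trans hs hg)) mulr_sumr.
  rewrite exchange_big /=; apply: big1 => j _.
  have : (x *m W *m (\matrix_(i < n, j < a) ((i : nat)%:R ^+ j))) 0 j = 0 :> R.
    by rewrite -mulmxA WM mulmx0 mxE.
  rewrite mxE => h.
  transitivity (p`_j * \sum_(i < n) (x *m W) 0 i * (\matrix_(i < n, j < a) ((i : nat)%:R ^+ j) : 'M[R]_(n, a)) i j); last by rewrite h mulr0.
  by rewrite mulr_sumr; apply: eq_bigr => i _; rewrite yfE !mxE mulrCA.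
by move: hsum; rewrite hzero ltxx.
Qed.

Lemma alt_ge x : x != 0 -> (a < alt [tuple sgnR (yf x i) | i < n])%N.
Proof.
move=> x0; have [mk [hs [ha [hz _]]]] := mask_ex (yf x) n.
have hsz : size mk == n by rewrite hs.
have e : tval [tuple sgnR (yf x i) | i < n] = map (fun i => sgnR (yf x i)) (iota 0 n).
  by rewrite /= /image_mem enumT -val_enum_ord -map_comp enumT.
apply: (leq_trans (core x0)); rewrite -hz /alt.
have := @leq_bigmax_cond _ (fun m : n.-tuple bool => alternating (mask m [tuple sgnR (yf x i) | i < n]))
  (fun m => size (mask m [tuple sgnR (yf x i) | i < n])) (Tuple hsz).
by rewrite /= e; apply.
Qed.

Lemma count_ge (x : 'rV[R]_(d.+1)) : x != 0 -> (a < #|[set k : 'I_n | (x *m W) 0%R k != 0%R]|)%N.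
Proof.
move=> x0; apply: (leq_trans (core x0)); apply: (leq_trans (galt_count _ _)).
rewrite -sum1_card [X in (_ <= X)%N]big_mkcond /= leq_eqVlt; apply/orP; left; apply/eqP.
by apply: eq_bigr => k _; rewrite inE yfE; case: (_ != _).
Qed.

Lemma exists_vanish (S : {set 'I_n}) : (#|S| <= d)%N ->
  exists2 x : 'rV[R]_(d.+1), x != 0 & forall s, s \in S -> (x *m W) 0 s = 0.
Proof.
move=> hS.
set C := colsub (fun k : 'I_#|S| => enum_val k) W.
have hr : (0 < \rank (kermx C))%N.
  rewrite mxrank_ker subn_gt0; apply: leq_ltn_trans (rank_leq_col C) _; by rewrite ltnS.
have : kermx C != 0 by rewrite -mxrank_eq0 -lt0n.
case/matrix0Pn => i [j hij].
exists (row i (kermx C)).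
  apply/eqP => e; have : row i (kermx C) 0 j = kermx C i j by rewrite mxE.
  by rewrite e mxE => h; rewrite -h eqxx in hij.
have hx : row i (kermx C) *m C = 0 by rewrite -row_mul mulmx_ker row0.
move=> s hs; have := congr1 (fun M : 'M_(1, #|S|) => M 0 (enum_rank_in hs s)) hx.
rewrite /= mxE [in RHS]mxE => <-; rewrite mxE; apply: eq_bigr => l _.
rewrite /C !mxE; congr (_ * W l _); exact: (esym (enum_rankK_in hs hs)).
Qed.

Lemma no_dep (S : {set 'I_n}) j : #|S| = d -> j \notin S ->
  (forall x : 'rV[R]_(d.+1), (forall s, s \in S -> (x *m W) 0 s = 0) -> (x *m W) 0 j = 0) -> False.
Proof.
move=> cS jS hdep.
have [x x0 hx] := exists_vanish (eq_leq cS).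
have := count_ge x0.
have sub : [set k | (x *m W) 0%R k != 0%R] \subset ~: (j |: S).
  apply/subsetP => k; rewrite !inE; apply: contraR; rewrite negbK => /orP[/eqP->|ks].
    by rewrite hdep.
  by rewrite hx.
have := cardsC (j |: S); rewrite cardsU1 jS cS card_ord /= => e.
move: e; set c := #|~: (j |: S)|. move=> e; have hc : c = a by lia.
have := subset_leq_card sub; rewrite -/c hc => h1 h2.
by move: (leq_trans h2 h1); rewrite ltnn.
Qed.

Definition wc (i : 'I_n) : 'rV[R]_(d.+1) := \row_k W k i.
Lemma dot_wc x i : dotp x (wc i) = (x *m W) 0 i.
Proof. by rewrite /dotp !mxE; apply: eq_bigr => k _; rewrite mxE. Qed.
Lemma dotZ (x u : 'rV[R]_(d.+1)) c : dotp x (c *: u) = c * dotp x u.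
Proof. by rewrite /dotp mulr_sumr; apply: eq_bigr => k _; rewrite mxE mulrCA. Qed.

Lemma wc_nz i : wc i != 0.
Proof.
apply/eqP => e.
have hS : (d <= #|~: [set i]|)%N by rewrite cardsC1 card_ord; lia.
have [S sS cS] := exists_subset hS.
apply: (no_dep cS (j := i)).
  by apply/negP => /(subsetP sS); rewrite !inE eqxx.
move=> x _; rewrite -dot_wc e /dotp big1 // => k _; by rewrite mxE mulr0.
Qed.

Lemma wc_prop i j c : i != j -> (1 <= d)%N -> wc j = c *: wc i -> False.
Proof.
move=> ij d1 e.
have hS : (d.-1 <= #|~: [set i; j]|)%N.
  have := cardsC [set i; j]; rewrite cards2 ij card_ord => h; lia.
have [S' sS cS] := exists_subset hS.
have iS' : i \notin S' by apply/negP => /(subsetP sS); rewrite !inE eqxx.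
have jS' : j \notin S' by apply/negP => /(subsetP sS); rewrite !inE eqxx orbT.
have cS2 : #|i |: S'| = d by rewrite cardsU1 iS' cS; lia.
apply: (no_dep cS2 (j := j)).
  by rewrite !inE negb_or eq_sym ij.
move=> x hx; rewrite -dot_wc e dotZ dot_wc hx ?mulr0 //; by rewrite !inE eqxx.
Qed.
End Main.

Unset Implicit Arguments.
Theorem lemma1 (R : realType) (n : nat) (V : finType) (sigma : 'I_n -> V)
  (P : pred ({set V} * {set V})) :
  (0 < n)%N -> #|V| = n -> bijective sigma -> signed_increasing P ->
  (alt_prop P sigma < n)%N ->
  let d := (n - alt_prop P sigma - 1)%N in
  exists phi : V -> 'rV[R]_(d.+1),
    (forall v, sphere (phi v)) /\
    (forall x : 'rV[R]_(d.+1), sphere x ->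
       P ([set v | hemi x (phi v)], [set v | hemi (- x) (phi v)])) /\
    ((1 <= d)%N -> injective phi).
Proof.
move=> n0 hV hbij hP ha d.
have hd : (d.+1 + alt_prop P sigma = n)%N by rewrite /d; lia.
have [W [Wf WM]] := @exW R n (alt_prop P sigma) d.+1
  (\matrix_(i < n, j < alt_prop P sigma) ((i : nat)%:R ^+ j)) (ltac:(rewrite /d; lia)).
case: hbij => g h1 h2.
pose w v := wc W (g v).
have Dpos v : 0 < dotp (w v) (w v).
  have := wc_nz hd Wf WM (g v); rewrite -/(w v) => wn.
  rewrite lt_def; apply/andP; split; last by apply: sumr_ge0 => k _; rewrite -expr2 sqr_ge0.
  have hge : forall i : 'I_d.+1, true -> 0 <= w v 0 i * w v 0 i.
    by move=> i _; rewrite -expr2 sqr_ge0.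
  apply/eqP => /(psumr_eq0P hge) h; move/eqP: wn; apply; apply/rowP => k.
  have /eqP := h k isT; rewrite mulf_eq0 orbb => /eqP ->; by rewrite mxE.
pose c v := (Num.sqrt (dotp (w v) (w v)))^-1.
have cpos v : 0 < c v by rewrite invr_gt0 sqrtr_gt0.
pose phi v := c v *: w v.
have dotZl (x u : 'rV[R]_(d.+1)) k : dotp (k *: x) u = k * dotp x u.
  by rewrite /dotp mulr_sumr; apply: eq_bigr => i _; rewrite mxE mulrA.
have dotN (x u : 'rV[R]_(d.+1)) : dotp (- x) u = - dotp x u.
  by rewrite /dotp -sumrN; apply: eq_bigr => i _; rewrite mxE mulNr.
have sph v : sphere (phi v).
  rewrite /sphere /phi dotZl dotZ /c; apply/eqP.
  have hD := Dpos v; set D := dotp _ _ in hD *.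
  have sq : Num.sqrt D ^+ 2 = D by rewrite sqr_sqrtr // ltW.
  have s0 : Num.sqrt D != 0 by rewrite gt_eqF // sqrtr_gt0.
  rewrite -[X in _ * (_ * X)]sq; field; exact: s0.
exists phi; split => //; split.
  move=> x /eqP sx.
  have x0 : x != 0.
    apply/eqP => e; move: sx; rewrite e /dotp big1 => [|k _]; last by rewrite mxE mul0r.
    by move/eqP; rewrite eq_sym oner_eq0.
  set X := [tuple sgnR (yf W x i) | i < n].
  have hX := alt_ge Wf WM x0; rewrite -/X in hX.
  have PX : P (Xsigma sigma X).
    apply/negPn/negP => nP.
    have := @leq_bigmax_cond _ (fun X : n.-tuple sign => ~~ P (Xsigma sigma X)) (fun X => alt X) X nP.
    rewrite -/(alt_prop P sigma); lia.
  have hyf i : yf W x (g i) = (x *m W) 0 (g i) by rewrite yfE.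
  have hplus : [set v | hemi x (phi v)] = sigma @: Xplus X.
    apply/setP => v; rewrite inE -{2}(h2 v) mem_imset; last exact: can_inj h1.
    rewrite /Xplus inE tnth_mktuple hyf /hemi sph /= /phi dotZ /w dot_wc pmulr_rgt0 //.
    by rewrite /sgnR; case: ltrgtP.
  have hminus : [set v | hemi (- x) (phi v)] = sigma @: Xminus X.
    apply/setP => v; rewrite inE -{2}(h2 v) mem_imset; last exact: can_inj h1.
    rewrite /Xminus inE tnth_mktuple hyf /hemi sph /= /phi dotN dotZ /w dot_wc oppr_gt0 pmulr_rlt0 //.
    by rewrite /sgnR; case: ltrgtP.
  by rewrite hplus hminus.
move=> d1 v1 v2 e.
apply: (can_inj h2); apply/eqP; apply/negPn/negP => ij.
apply: (wc_prop hd Wf WM ij d1 (c := (c v2)^-1 * c v1)).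
rewrite -scalerA; move: e; rewrite /phi /w => ->.
by rewrite scalerA mulVf ?scale1r // gt_eqF.
Qed.
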